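(* Let $k$ be a constant and let $D$ be the derivation (linear, satisfying the Leibniz rule, killing constants) on polynomials in the commuting variables $I,x,y$ determined by $D(I)=I(x+y)$, $D(x)=2kxy$, $D(y)=2kxy$. Then for $n\ge1$, $$D^n(I)=I\sum_{w\in B_n}x^{\mathrm{wexc}(w)}y^{\mathrm{aexc}(w)}k^{n-\mathrm{cyc}(w)}.$$
   Context: $B_n$ is the hyperoctahedral group of signed permutations $w$ of $\pm[n]$ with $w(-i)=-w(i)$, written in standard cycle decomposition (each cycle starts with its element of largest absolute value, cycles ordered by increasing absolute value of first elements); $\mathrm{cyc}(w)$ is the number of cycles. An index $i\in[n]$ is a weak excedance if $w(i)=i$ or $w(|w(i)|)>w(i)$, and an anti-excedance if $w(i)=-i$ or $w(|w(i)|)<w(i)$; $\mathrm{wexc}(w)$, $\mathrm{aexc}(w)$ denote their numbers. *)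

(* Defs.v *)
From mathcomp Require Import all_boot all_order all_algebra all_fingroup.
From mathcomp Require Import mpoly.
Set Implicit Arguments. Unset Strict Implicit. Unset Printing Implicit Defensive.
Import GRing.Theory Num.Theory.
Local Open Scope ring_scope.

(* A signed permutation w of ±[n] (with
   w(-i) = -w(i)) is encoded by the pair (s, e) with s : {perm 'I_n} and
   e : {ffun 'I_n -> bool}: the index i : 'I_n stands for the element i+1
   of [n], and w(i+1) = (-1)^(e i) * (s i + 1). *)
Definition signed_perm (n : nat) : finType :=
  ({perm 'I_n} * {ffun 'I_n -> bool})%type.

Definition sp_val n (w : signed_perm n) (i : 'I_n) : int :=
  let v := ((w.1 i).+1)%:Z in if w.2 i then - v else v.

(* |w(i+1)| is (w.1 i) + 1, i.e. the index w.1 i; so w(|w(i)|) is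
   sp_val w (w.1 i). *)
Definition is_wexc n (w : signed_perm n) (i : 'I_n) : bool :=
  (sp_val w i == (i.+1)%:Z) || (sp_val w i < sp_val w (w.1 i)).

Definition is_aexc n (w : signed_perm n) (i : 'I_n) : bool :=
  (sp_val w i == - (i.+1)%:Z) || (sp_val w (w.1 i) < sp_val w i).

Definition wexc n (w : signed_perm n) : nat := #|[set i | is_wexc w i]|.
Definition aexc n (w : signed_perm n) : nat := #|[set i | is_aexc w i]|.

(* Number of cycles in the standard cycle decomposition of w: the cycles of
   the underlying permutation |w| : i |-> |w(i)| of [n]. *)
Definition cyc n (w : signed_perm n) : nat := #|porbits w.1|.

(* D is a derivation of the polynomial ring R[I,x,y] (variables 'X_0,'X_1,'X_2) *)
Definition is_derivation (R : comRingType)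
    (D : {mpoly R[3]} -> {mpoly R[3]}) : Prop :=
  [/\ (forall p q, D (p + q) = D p + D q),
      (forall (c : R) p, D (c *: p) = c *: D p),
      (forall p q, D (p * q) = D p * q + p * D q) &
      (forall c : R, D c%:MP = 0)].

(* Main.v *)
Require Import Defs.
From mathcomp Require Import all_boot all_order all_algebra all_fingroup.
From mathcomp Require Import mpoly zify.
Import GRing.Theory.
Local Open Scope ring_scope.
Set Implicit Arguments. Unset Strict Implicit.

Lemma is_aexcE n (w : signed_perm n) i : is_aexc w i = ~~ is_wexc w i.
Proof.
rewrite /is_aexc /is_wexc /sp_val.
case: w => s e /=.
have [Hsi|Hsi] := eqVneq (s i) i.
  rewrite Hsi; move/(congr1 val): Hsi => /= Hsi; case: (e i) => /=; lia.
have Hss : s (s i) != s i by apply: contra Hsi => /eqP/perm_inj ->.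
move: Hsi Hss; rewrite -!(inj_eq val_inj) /=.
case: (e i); case: (e (s i)); lia.
Qed.

Lemma big_opt (R : nmodType) (T : finType) (F : option T -> R) :
  \sum_(o : option T) F o = F None + \sum_(i : T) F (Some i).
Proof.
rewrite (bigD1 None) //=; congr (_ + _).
rewrite (reindex_omap Some id) /=; last by case.
by apply: eq_bigl => i; rewrite eqxx.
Qed.

Definition ext n (s : {perm 'I_n}) : {perm 'I_n.+1} := lift_perm ord_max ord_max s.

Lemma extX n (s : {perm 'I_n}) m j :
  (ext s ^+ m)%g (lift ord_max j) = lift ord_max ((s ^+ m)%g j).
Proof.
rewrite !permX; elim: m => //= m ->; by rewrite /ext lift_perm_lift.
Qed.

Lemma extX_max n (s : {perm 'I_n}) m : (ext s ^+ m)%g ord_max = ord_max.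
Proof.
rewrite !permX; elim: m => //= m ->; by rewrite /ext lift_perm_id.
Qed.

Lemma porbit_ext_lift n (s : {perm 'I_n}) j :
  porbit (ext s) (lift ord_max j) = lift ord_max @: porbit s j.
Proof.
apply/setP => y; apply/porbitP/imsetP.
  by case=> m ->; exists ((s ^+ m)%g j); rewrite ?mem_porbit // extX.
by case=> z /porbitP [m ->] ->; exists m; rewrite extX.
Qed.

Lemma porbit_ext_max n (s : {perm 'I_n}) :
  porbit (ext s) ord_max = [set ord_max].
Proof.
apply/setP => y; rewrite inE; apply/porbitP/eqP.
  by case=> m ->; rewrite extX_max.
by move=> ->; exists 0%N; rewrite expg0 perm1.
Qed.

Lemma cyc_ext n (s : {perm 'I_n}) :
  #|porbits (ext s)| = (#|porbits s|).+1.
Proof.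
have -> : porbits (ext s) = [set ord_max] |: ((fun A : {set 'I_n} => lift ord_max @: A) @: porbits s).
  apply/setP => A; rewrite !inE; apply/imsetP/orP.
    case=> x _ ->; case: (unliftP ord_max x) => [j|] ->.
      by right; rewrite porbit_ext_lift; apply: imset_f; apply: imset_f.
    by left; rewrite porbit_ext_max.
  case=> [/eqP ->|/imsetP [B /imsetP [j _ ->] ->]].
    by exists ord_max; rewrite ?porbit_ext_max.
  by exists (lift ord_max j); rewrite ?porbit_ext_lift.
rewrite cardsU1 card_imset; last exact/imset_inj/lift_inj.
suff -> : [set ord_max] \notin (fun A : {set 'I_n} => lift ord_max @: A) @: porbits s by [].
apply/imsetP => -[B _ HB].
have : (ord_max : 'I_n.+1) \in [set ord_max] by rewrite inE.
rewrite HB => /imsetP [z _ /eqP]; by rewrite (negbTE (neq_lift _ _)).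
Qed.

Lemma cyc_ins n (s : {perm 'I_n}) (i : 'I_n) :
  #|porbits (tperm (lift ord_max i) ord_max * ext s)%g| = #|porbits s|.
Proof.
have := porbits_mul_tperm (ext s) (lift ord_max i) ord_max => /=.
rewrite porbit_ext_max inE cyc_ext.
have H : (lift ord_max i == ord_max) = false.
  by apply/negbTE; rewrite eq_sym neq_lift.
rewrite H /= addn2 addn1.
by case.
Qed.

Definition ins n (x : signed_perm n * option 'I_n * bool) : signed_perm n.+1 :=
  let: (w, o, b) := x in
  match o with
  | None => (ext w.1, [ffun j => if unlift ord_max j is Some j' then w.2 j' else b])
  | Some i => ((tperm (lift ord_max i) ord_max * ext w.1)%g,
      [ffun j => if unlift ord_max j is Some j' then (if j' == i then b else w.2 j')
                 else w.2 i])
  end.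

Lemma ins_inj n : injective (@ins n).
Proof.
move=> [[[s1 e1] o1] b1] [[[s2 e2] o2] b2] /=.
have maxE : forall m (j : 'I_m), (lift ord_max j == ord_max) = false.
  by move=> m j; apply/negbTE; rewrite eq_sym neq_lift.
case: o1 => [i1|]; case: o2 => [i2|] /= [Hs He].
- have Hi : i1 = i2.
    have := congr1 (fun p : {perm _} => p (lift ord_max i1)) Hs.
    rewrite /= !permM tpermL /ext lift_perm_id.
    have [//|ne] := eqVneq i1 i2.
    rewrite tpermD ?lift_perm_lift.
    - by move=> /eqP; rewrite (negbTE (neq_lift _ _)).
    - by rewrite (inj_eq lift_inj) eq_sym.
    - exact: neq_lift.
  subst i2.
  have Hs' : s1 = s2.
    move/mulgI: Hs => Hs; apply/permP => j.
    by have := congr1 (fun p : {perm _} => p (lift ord_max j)) Hs;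
      rewrite /ext !lift_perm_lift => /lift_inj.
  subst s2.
  have Hb : b1 = b2.
    by have := congr1 (fun f : {ffun _} => f (lift ord_max i1)) He; rewrite !ffunE liftK eqxx.
  subst b2.
  have He' : e1 = e2.
    apply/ffunP => j; have [->|ne] := eqVneq j i1.
      by have := congr1 (fun f : {ffun _} => f ord_max) He; rewrite !ffunE unlift_none.
    by have := congr1 (fun f : {ffun _} => f (lift ord_max j)) He; rewrite !ffunE liftK (negbTE ne).
  by subst.
- have := congr1 (fun p : {perm _} => p (lift ord_max i1)) Hs.
  by rewrite /= !permM tpermL /ext lift_perm_id lift_perm_lift => /eqP; rewrite (negbTE (neq_lift _ _)).
- have := congr1 (fun p : {perm _} => p (lift ord_max i2)) Hs.
  by rewrite /= !permM tpermL /ext lift_perm_id lift_perm_lift => /eqP; rewrite eq_sym (negbTE (neq_lift _ _)).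
- have Hs' : s1 = s2.
    apply/permP => j.
    by have := congr1 (fun p : {perm _} => p (lift ord_max j)) Hs;
      rewrite /ext !lift_perm_lift => /lift_inj.
  subst s2.
  have Hb : b1 = b2.
    by have := congr1 (fun f : {ffun _} => f ord_max) He; rewrite !ffunE unlift_none.
  subst b2.
  have He' : e1 = e2.
    by apply/ffunP => j; have := congr1 (fun f : {ffun _} => f (lift ord_max j)) He; rewrite !ffunE liftK.
  by subst.
Qed.

Lemma card_sp n : #|signed_perm n| = (n`! * 2 ^ n)%N.
Proof. by rewrite /signed_perm card_prod card_Sn card_ffun card_bool card_ord. Qed.

Lemma ins_bij n : bijective (@ins n).
Proof.
apply: inj_card_bij (@ins_inj n) _.
rewrite !card_prod card_option card_bool !card_Sn !card_ffun card_bool !card_ord factS expnS.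
by rewrite leq_eqVlt; apply/orP; left; apply/eqP; nia.
Qed.

Lemma wexc_None n (w : signed_perm n) b (j : 'I_n) :
  is_wexc (ins (w, None, b)) (lift ord_max j) = is_wexc w j.
Proof.
case: w => s e.
rewrite /is_wexc /sp_val /= !ffunE /ext !lift_perm_lift !liftK !lift_max.
by rewrite /bump leqNgt ltn_ord.
Qed.

Lemma wexc_None_max n (w : signed_perm n) b :
  is_wexc (ins (w, None, b)) ord_max = ~~ b.
Proof.
case: w => s e.
rewrite /is_wexc /sp_val /= !ffunE /ext !lift_perm_id unlift_none.
case: b => /=; lia.
Qed.

Section InsSome.
Variables (n : nat) (w : signed_perm n) (i : 'I_n) (b : bool).
Let w' := ins (w, Some i, b).

Lemma insS1_lift (j : 'I_n) : j != i -> w'.1 (lift ord_max j) = lift ord_max (w.1 j).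
Proof.
move=> ne; rewrite /w' /= permM tpermD ?(inj_eq lift_inj) 1?eq_sym ?neq_lift //.
- by rewrite /ext lift_perm_lift.
- by rewrite eq_sym neq_lift.
Qed.

Lemma insS1_i : w'.1 (lift ord_max i) = ord_max.
Proof. by rewrite /w' /= permM tpermL /ext lift_perm_id. Qed.

Lemma insS1_max : w'.1 ord_max = lift ord_max (w.1 i).
Proof. by rewrite /w' /= permM tpermR /ext lift_perm_lift. Qed.

Lemma insSv_lift (j : 'I_n) : j != i -> sp_val w' (lift ord_max j) = sp_val w j.
Proof.
move=> ne; rewrite /sp_val insS1_lift // lift_max /w' /= ffunE liftK (negbTE ne).
by [].
Qed.

Lemma insSv_i : sp_val w' (lift ord_max i) = if b then - (n.+1)%:Z else (n.+1)%:Z.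
Proof. by rewrite /sp_val insS1_i /w' /= ffunE liftK eqxx. Qed.

Lemma insSv_max : sp_val w' ord_max = sp_val w i.
Proof. by rewrite /sp_val insS1_max lift_max /w' /= ffunE unlift_none. Qed.


Lemma insW_lift (j : 'I_n) : j != i -> w.1 j != i ->
  is_wexc w' (lift ord_max j) = is_wexc w j.
Proof.
move=> ne ne2; rewrite /is_wexc insSv_lift // insS1_lift // insSv_lift // lift_max.
by [].
Qed.

Lemma insW_i : is_wexc w' (lift ord_max i) = b.
Proof.
rewrite /is_wexc insSv_i insS1_i insSv_max lift_max /sp_val.
have := ltn_ord (w.1 i); have := ltn_ord i.
by case: b; case: (w.2 i) => /=; lia.
Qed.

Lemma insW_pre (j : 'I_n) : j != i -> w.1 j = i -> is_wexc w' (lift ord_max j) = ~~ b.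
Proof.
move=> ne Hj; rewrite /is_wexc insSv_lift // insS1_lift // Hj insSv_i lift_max /sp_val Hj.
move: ne; rewrite -(inj_eq val_inj) /=.
have := ltn_ord j; have := ltn_ord i.
by case: b; case: (w.2 j) => /=; lia.
Qed.

Lemma insW_max : w.1 i != i -> is_wexc w' ord_max = is_wexc w i.
Proof.
move=> ne; rewrite /is_wexc insSv_max insS1_max insSv_lift //.
rewrite /sp_val; move: ne; rewrite -(inj_eq val_inj) /=.
have := ltn_ord (w.1 i); have := ltn_ord i.
by case: (w.2 i) => /=; lia.
Qed.

Lemma insW_max_fix : w.1 i = i -> is_wexc w' ord_max = ~~ b.
Proof.
move=> Hi; rewrite /is_wexc insSv_max insS1_max Hi insSv_i /sp_val Hi.
have := ltn_ord i.
by case: b; case: (w.2 i) => /=; lia.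
Qed.

End InsSome.

Lemma wexc_sum n (w : signed_perm n) : wexc w = (\sum_(j < n) (is_wexc w j : nat))%N.
Proof.
rewrite /wexc -sum1_card big_mkcond /=; apply: eq_bigr => j _.
by rewrite inE; case: (is_wexc w j).
Qed.

Lemma wexc_le n (w : signed_perm n) : (wexc w <= n)%N.
Proof. by rewrite /wexc -[X in (_ <= X)%N]card_ord max_card. Qed.

Lemma aexcE n (w : signed_perm n) : aexc w = (n - wexc w)%N.
Proof.
rewrite /aexc /wexc.
have -> : [set i | is_aexc w i] = ~: [set i | is_wexc w i].
  by apply/setP => j; rewrite !inE is_aexcE.
by rewrite cardsCs setCK card_ord.
Qed.

Lemma cyc_le n (w : signed_perm n) : (cyc w <= n)%N.
Proof.
rewrite /cyc /porbits; apply: leq_trans (leq_imset_card _ _) _.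
by rewrite card_ord.
Qed.

Lemma widen_lift n (j : 'I_n) : widen_ord (leqnSn n) j = lift ord_max j.
Proof. by apply/val_inj; rewrite /= /bump leqNgt ltn_ord. Qed.

Lemma wexc_insN n (w : signed_perm n) b : wexc (ins (w, None, b)) = (wexc w + ~~ b)%N.
Proof.
rewrite !wexc_sum big_ord_recr /= wexc_None_max; congr (_ + _)%N.
by apply: eq_bigr => j _; rewrite widen_lift wexc_None.
Qed.

Lemma wexc_insS n (w : signed_perm n) i b :
  (wexc (ins (w, Some i, b)) + is_wexc w ((w.1)^-1 i)%g = wexc w + 1)%N.
Proof.
set j0 := ((w.1)^-1 i)%g.
have Hj0 : w.1 j0 = i by rewrite /j0 permKV.
rewrite !wexc_sum big_ord_recr /=.
rewrite (eq_bigr (fun j => (is_wexc (ins (w, Some i, b)) (lift ord_max j) : nat))); last first.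
  by move=> j _; rewrite widen_lift.
rewrite (bigD1 i) // insW_i [X in (_ = X + _)%N](bigD1 i) //.
have [H|H] := eqVneq j0 i.
  have Hi : w.1 i = i by rewrite -{1}H.
  rewrite insW_max_fix // H.
  rewrite (eq_bigr (fun j => (is_wexc w j : nat))); last first.
    move=> j ne; rewrite insW_lift //; apply: contra ne => /eqP Hj.
    by rewrite -H /j0 -Hj permK.
  by case: b; case: (is_wexc w i) => /=; lia.
have Hi : w.1 i != i.
  apply: contra H => /eqP Hi; apply/eqP; apply: (@perm_inj _ w.1).
  by rewrite Hj0 Hi.
rewrite insW_max // (bigD1 j0) // [X in (_ = _ + X + _)%N](bigD1 j0) // insW_pre //.
rewrite (eq_bigr (fun j => (is_wexc w j : nat))); last first.
  move=> j /andP [ne1 ne2]; rewrite insW_lift //; apply: contra ne2 => /eqP Hj.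
  by rewrite /j0 -Hj permK.
by case: b; case: (is_wexc w i); case: (is_wexc w j0) => /=; lia.
Qed.

From mathcomp Require Import ring.

Lemma sum_pair (M : nmodType) (A B : finType) (F : A * B -> M) :
  \sum_(x : A * B) F x = \sum_(a : A) \sum_(b : B) F (a, b).
Proof. by rewrite pair_bigA; apply: eq_bigr => -[a b]. Qed.

Section Poly.
Variables (R : comRingType) (k : R).
Local Notation X0 := ('X_(0 : 'I_3) : {mpoly R[3]}).
Local Notation X1 := ('X_(1 : 'I_3) : {mpoly R[3]}).
Local Notation X2 := ('X_(2 : 'I_3) : {mpoly R[3]}).

Definition wt n (w : signed_perm n) : {mpoly R[3]} :=
  X1 ^+ wexc w * X2 ^+ aexc w * k%:MP ^+ (n - cyc w).

Lemma cyc_insN n (w : signed_perm n) b : cyc (ins (w, None, b)) = (cyc w).+1.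
Proof. by case: w => s e; rewrite /cyc /= cyc_ext. Qed.

Lemma cyc_insS n (w : signed_perm n) i b : cyc (ins (w, Some i, b)) = cyc w.
Proof. by case: w => s e; rewrite /cyc /= cyc_ins. Qed.

Lemma acl1 (T : comRingType) (a x b c : T) : a * (x * b) * c = a * b * c * x.
Proof. by ring. Qed.
Lemma acl2 (T : comRingType) (a x b c : T) : x * a * b * c = a * b * c * x.
Proof. by ring. Qed.
Lemma acl3 (T : comRingType) (a b c x y : T) : a * b * (c * y) = a * b * c * y.
Proof. by ring. Qed.

Lemma acl4 (T : comRingType) (a b c y q : T) : a * (y * b) * (q * c) = a * b * c * q * y.
Proof. by ring. Qed.
Lemma acl5 (T : comRingType) (a b c y q : T) : y * a * b * (q * c) = a * b * c * q * y.
Proof. by ring. Qed.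

Lemma wt_insN n (w : signed_perm n) b :
  wt (ins (w, None, b)) = wt w * (if b then X2 else X1).
Proof.
rewrite /wt !aexcE wexc_insN cyc_insN subSS.
have := wexc_le w; case: b => /= H.
  by rewrite addn0 subSn // exprS acl1.
by rewrite addn1 subSS exprS acl2.
Qed.

Lemma wt_insS n (w : signed_perm n) i b :
  wt (ins (w, Some i, b)) = wt w * k%:MP * (if is_wexc w ((w.1)^-1 i)%g then X2 else X1).
Proof.
move: (wexc_insS w i b).
rewrite /wt !aexcE cyc_insS (subSn (cyc_le w)) exprS.
move: (wexc (ins (w, Some i, b))) => W.
have := wexc_le w; case: (is_wexc w _) => H /= E.
  have -> : W = wexc w by lia.
  by rewrite subSn // exprS acl4.
have -> : W = (wexc w).+1 by lia.
by rewrite subSS exprS acl5.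
Qed.

Lemma acl6 (T : comRingType) (a x y q S : T) :
  a * y + a * x + (a * q * S + a * q * S) = a * (x + y) + (a * q * S) *+ 2.
Proof. by ring. Qed.

Lemma sum_if n (w : signed_perm n) :
  \sum_(j < n) (if is_wexc w j then X2 else X1) = X2 *+ wexc w + X1 *+ aexc w.
Proof.
rewrite (bigID (is_wexc w)) /=.
rewrite (eq_bigr (fun _ => X2)); last by move=> j ->.
rewrite [X in _ + X](eq_bigr (fun _ => X1)); last by move=> j /negbTE ->.
rewrite !sumr_const /wexc /aexc; congr (_ *+ _ + _ *+ _).
  by apply: eq_card => j; rewrite inE.
by apply: eq_card => j; rewrite !inE is_aexcE.
Qed.

Lemma P_S n : \sum_(w' : signed_perm n.+1) wt w' =
  \sum_(w : signed_perm n) (wt w * (X1 + X2) + (wt w * k%:MP * (X2 *+ wexc w + X1 *+ aexc w)) *+ 2).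
Proof.
rewrite (reindex (@ins n)) /=; last exact/onW_bij/ins_bij.
rewrite [LHS]sum_pair [LHS]sum_pair; apply: eq_bigr => w _.
rewrite big_opt !big_bool !wt_insN.
rewrite (eq_bigr (fun i => wt w * k%:MP * (if is_wexc w ((w.1)^-1 i)%g then X2 else X1)
   + wt w * k%:MP * (if is_wexc w ((w.1)^-1 i)%g then X2 else X1))); last first.
  by move=> i _; rewrite big_bool !wt_insS.
rewrite big_split /= -mulr_sumr.
rewrite (reindex_inj (@perm_inj _ w.1)) /=.
rewrite (eq_bigr (fun j => if is_wexc w j then X2 else X1)); last first.
  by move=> j _; rewrite permK.
by rewrite sum_if acl6.
Qed.

Lemma powstep (T : comRingType) (x y q : T) a :
  (x ^+ a.-1 * (q * x * y)) *+ a = (q * x ^+ a * y) *+ a.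
Proof. by case: a => [|a]; rewrite ?mulr0n //= exprS; congr (_ *+ _); ring. Qed.

Lemma powstep2 (T : comRingType) (x y q : T) b :
  (y ^+ b.-1 * (q * x * y)) *+ b = (q * x * y ^+ b) *+ b.
Proof. by case: b => [|b]; rewrite ?mulr0n //= exprS; congr (_ *+ _); ring. Qed.

Lemma aclD (T : comRingType) (x y q A B C : T) a b :
  ((q * A * y) *+ a * B + A * ((q * x * B) *+ b)) * C + A * B * 0 =
  A * B * C * q * (y *+ a + x *+ b).
Proof. by ring. Qed.

Section Deriv.
Variable D : {mpoly R[3]} -> {mpoly R[3]}.
Hypothesis hD : is_derivation D.
Hypothesis h1 : D X1 = (2 * k)%:MP * X1 * X2.
Hypothesis h2 : D X2 = (2 * k)%:MP * X1 * X2.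

Lemma D0 : D 0 = 0.
Proof.
case: hD => hadd _ _ _.
have := hadd 0 0; rewrite addr0 => /(congr1 (fun x => x - D 0)).
by rewrite subrr addrK.
Qed.

Lemma D_sum (I : finType) (F : I -> {mpoly R[3]}) : D (\sum_i F i) = \sum_i D (F i).
Proof. case: hD => hadd _ _ _; exact: (big_morph D hadd D0). Qed.

Lemma D1 : D 1 = 0.
Proof. case: hD => _ _ _ hC; by rewrite -mpolyC1 hC. Qed.

Lemma D_pow p m : D (p ^+ m) = (p ^+ m.-1 * D p) *+ m.
Proof.
case: hD => _ _ hmul _.
elim: m => [|m IH]; first by rewrite expr0 D1 mulr0n.
rewrite exprS hmul IH; case: m IH => [|m] IH /=.
  by rewrite !expr0 mulr1 mulr0n mulr0 addr0 mul1r mulr1n.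
by rewrite mulrnAr mulrA -exprS (mulrC (D p)) [RHS]mulrS.
Qed.

Lemma D_wt n (w : signed_perm n) :
  D (wt w) = wt w * (k%:MP *+ 2) * (X2 *+ wexc w + X1 *+ aexc w).
Proof.
case: hD => _ _ hmul hC.
rewrite /wt !hmul !D_pow hC mulr0 mul0rn h1 h2 powstep powstep2.
have E2 : (2 * k) = k *+ 2 by rewrite mulr_natl.
rewrite E2 mpolyCMn.
exact: aclD.
Qed.

End Deriv.

End Poly.

Lemma acl7 (T : comRingType) (a q S : T) : a * (q *+ 2) * S = (a * q * S) *+ 2.
Proof. by ring. Qed.

Theorem lemma3 (R : comRingType) (k : R) (D : {mpoly R[3]} -> {mpoly R[3]}) :
  is_derivation D ->
  D 'X_(0 : 'I_3) = 'X_(0 : 'I_3) * ('X_(1 : 'I_3) + 'X_(2 : 'I_3)) ->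
  D 'X_(1 : 'I_3) = (2 * k)%:MP * 'X_(1 : 'I_3) * 'X_(2 : 'I_3) ->
  D 'X_(2 : 'I_3) = (2 * k)%:MP * 'X_(1 : 'I_3) * 'X_(2 : 'I_3) ->
  forall n : nat, (0 < n)%N ->
    iter n D 'X_(0 : 'I_3) =
      'X_(0 : 'I_3) *
        \sum_(w : signed_perm n)
           'X_(1 : 'I_3) ^+ wexc w * 'X_(2 : 'I_3) ^+ aexc w
             * k%:MP ^+ (n - cyc w).
Proof.
move=> hD h0 h1 h2 n _.
have hD' := hD; case: hD' => hadd hZ hmul hC.
change (iter n D 'X_(0:'I_3) = 'X_(0:'I_3) * \sum_(w : signed_perm n) wt k w).
elim: n => [|n IH].
  rewrite /= (eq_bigr (fun _ => 1)); last first.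
    move=> w _; rewrite /wt aexcE.
    have := wexc_le w; have := cyc_le w; rewrite !leqn0 => /eqP -> /eqP ->.
    by rewrite !expr0 !mulr1.
  by rewrite sumr_const card_sp /= mulr1n mulr1.
rewrite iterS IH hmul h0 (D_sum hD).
rewrite (eq_bigr _ (fun w _ => D_wt hD h1 h2 w)) P_S.
rewrite big_split /= -mulr_suml [RHS]mulrDr.
congr (_ + _); first by rewrite [X in _ = _ * X]mulrC mulrA.
by congr (_ * _); apply: eq_bigr => w _; rewrite acl7.
Qed.
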